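(* Let $n$ be a positive integer, let $\mathbf{A}$ be an infinite $n$-generated subdirectly irreducible bi-Heyting algebra validating $LFC$, and let $\mathfrak{X}=\mathbf{A}_*$. Let $m$ be a minimal element of $\mathfrak{X}$ with $X=\{x:m<x\}\uplus min(\mathfrak{X})$ and such that every minimal $y\ne m$ has a unique immediate successor lying strictly above $m$. Let $y\le x$ be points with $m\le y$ such that the interval $[y,x]=\{u: y\le u\le x\}$ has more than $2^n$ elements. Then there exists $y'$ with $y<y'\le x$ such that $y'$ has an immediate predecessor $w$ with $w\not>m$. Consequently, the set $(\downarrow x\setminus\downarrow y)\cap min(\mathfrak{X})$ is nonempty.
   Context: Bi-Heyting algebras are bounded distributive lattices with residuated $\to$ and $\leftarrow$. $\mathbf{A}_*$ is the bi-Esakia dual of $\mathbf{A}$: prime filters ordered by inclusion with the Priestley topology. For SI $\mathbf{A}$ validating $\mathsf{bi\text{-}LC}$ (bi-intuitionistic logic plus $(p\to q)\vee(q\to p)$), $\mathbf{A}_*$ is a bi-Esakia co-tree: it has a top and principal upsets are chains. $LFC=\mathsf{bi\text{-}LC}+\beta(\mathfrak{F}_0)+\mathcal{J}(\mathfrak{F}_1)+\mathcal{J}(\mathfrak{F}_2)+\mathcal{J}(\mathfrak{F}_3)$. For a finite co-tree $\mathfrak{Y}$: - $\mathfrak{X}\not\models\beta(\mathfrak{Y})$ iff $\mathfrak{Y}$ order-embeds into $\mathfrak{X}$; - $\mathfrak{X}\not\models\mathcal{J}(\mathfrak{Y})$ iff there is a continuous surjective bi-p-morphism onto $\mathfrak{Y}$.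 The co-trees are: - $\mathfrak{F}_0$: $d<b<a$, $e<c<a$; - $\mathfrak{F}_1$: the chain $c<b<a$; - $\mathfrak{F}_2$: the chain $d<c<b<a$ plus $a'<a$, with $a'$ incomparable to $b,c,d$; - $\mathfrak{F}_3$: a top over three incomparable minimal points. $\downarrow x=\{u: u\le x\}$. *)

(* Defs.v *)
From Stdlib Require Import List Arith.
Import ListNotations.

Record biHA := BiHA {
  car :> Type;
  bjoin : car -> car -> car;
  bmeet : car -> car -> car;
  bimp  : car -> car -> car;
  bcoimp : car -> car -> car;
  bbot : car;
  btop : car;
  joinC : forall a b, bjoin a b = bjoin b a;
  meetC : forall a b, bmeet a b = bmeet b a;
  joinA : forall a b c, bjoin a (bjoin b c) = bjoin (bjoin a b) c;
  meetA : forall a b c, bmeet a (bmeet b c) = bmeet (bmeet a b) c;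
  joinKmeet : forall a b, bjoin a (bmeet a b) = a;
  meetKjoin : forall a b, bmeet a (bjoin a b) = a;
  meet_joinDr : forall a b c, bmeet a (bjoin b c) = bjoin (bmeet a b) (bmeet a c);
  join_bot : forall a, bjoin a bbot = a;
  meet_top : forall a, bmeet a btop = a;
  (* residuation of -> :  c /\ a <= b  iff  c <= a -> b  (x <= y := x /\ y = x) *)
  imp_res : forall a b c, bmeet (bmeet c a) b = bmeet c a <-> bmeet c (bimp a b) = c;
  (* residuation of <- :  a <- b <= c  iff  a <= b \/ c *)
  coimp_res : forall a b c, bmeet (bcoimp a b) c = bcoimp a b <-> bmeet a (bjoin b c) = a
}.

Arguments bjoin {_}. Arguments bmeet {_}. Arguments bimp {_}. Arguments bcoimp {_}.
Arguments bbot {_}. Arguments btop {_}.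

Definition ble {A : biHA} (a b : A) : Prop := bmeet a b = a.

Definition congruence (A : biHA) (R : A -> A -> Prop) : Prop :=
  (forall a, R a a) /\ (forall a b, R a b -> R b a) /\
  (forall a b c, R a b -> R b c -> R a c) /\
  (forall a b c d, R a b -> R c d ->
     R (bjoin a c) (bjoin b d) /\ R (bmeet a c) (bmeet b d) /\
     R (bimp a c) (bimp b d) /\ R (bcoimp a c) (bcoimp b d)).

Definition nontrivial_rel (A : biHA) (R : A -> A -> Prop) : Prop :=
  exists a b, R a b /\ a <> b.

Definition subdirectly_irreducible (A : biHA) : Prop :=
  exists theta, congruence A theta /\ nontrivial_rel A theta /\
    forall psi, congruence A psi -> nontrivial_rel A psi ->
      forall a b, theta a b -> psi a b.

Definition closed_sub (A : biHA) (S : A -> Prop) : Prop :=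
  S bbot /\ S btop /\
  (forall a b, S a -> S b ->
     S (bjoin a b) /\ S (bmeet a b) /\ S (bimp a b) /\ S (bcoimp a b)).

Definition n_generated (A : biHA) (n : nat) : Prop :=
  exists g : nat -> A,
    forall S : A -> Prop, closed_sub A S -> (forall i, i < n -> S (g i)) ->
      forall a, S a.

Definition infinite_alg (A : biHA) : Prop :=
  forall l : list A, exists a : A, ~ In a l.

Definition prime_filter (A : biHA) (F : A -> Prop) : Prop :=
  F btop /\ ~ F bbot /\
  (forall a b, F a -> ble a b -> F b) /\
  (forall a b, F a -> F b -> F (bmeet a b)) /\
  (forall a b, F (bjoin a b) -> F a \/ F b).

Definition pt (A : biHA) : Type := { F : A -> Prop | prime_filter A F }.

Definition ple {A : biHA} (x y : pt A) : Prop :=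
  forall a, proj1_sig x a -> proj1_sig y a.
Definition plt {A : biHA} (x y : pt A) : Prop := ple x y /\ ~ ple y x.
Definition peq {A : biHA} (x y : pt A) : Prop := ple x y /\ ple y x.

(* Priestley topology: generated by the sets phi(a) = {x | a \in x}
   and their complements. *)
Definition popen {A : biHA} (U : pt A -> Prop) : Prop :=
  forall x, U x -> exists (la lb : list A),
    (forall a, In a la -> proj1_sig x a) /\
    (forall b, In b lb -> ~ proj1_sig x b) /\
    (forall z : pt A, (forall a, In a la -> proj1_sig z a) ->
                      (forall b, In b lb -> ~ proj1_sig z b) -> U z).

Definition minimal {A : biHA} (x : pt A) : Prop :=
  forall z, ple z x -> ple x z.

(* z is an immediate successor of y (equivalently y an immediate predecessor of z) *)
Definition imm_succ {A : biHA} (y z : pt A) : Prop :=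
  plt y z /\ ~ exists u, plt y u /\ plt u z.

Record finposet := FinPoset {
  fcar :> Type;
  fle : fcar -> fcar -> Prop }.

Inductive F0t := F0a | F0b | F0c | F0d | F0e.
Definition F0le (u v : F0t) : Prop :=
  match u, v with
  | F0a, F0a | F0b, F0b | F0c, F0c | F0d, F0d | F0e, F0e => True
  | F0b, F0a | F0d, F0b | F0d, F0a | F0c, F0a | F0e, F0c | F0e, F0a => True
  | _, _ => False
  end.
Definition F0 := FinPoset F0t F0le.

Inductive F1t := F1a | F1b | F1c.
Definition F1le (u v : F1t) : Prop :=
  match u, v with
  | F1a, F1a | F1b, F1b | F1c, F1c => True
  | F1b, F1a | F1c, F1b | F1c, F1a => True
  | _, _ => False
  end.
Definition F1 := FinPoset F1t F1le.

Inductive F2t := F2a | F2b | F2c | F2d | F2a'.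
Definition F2le (u v : F2t) : Prop :=
  match u, v with
  | F2a, F2a | F2b, F2b | F2c, F2c | F2d, F2d | F2a', F2a' => True
  | F2b, F2a | F2c, F2a | F2d, F2a | F2c, F2b | F2d, F2b | F2d, F2c => True
  | F2a', F2a => True
  | _, _ => False
  end.
Definition F2 := FinPoset F2t F2le.

Inductive F3t := F3top | F3p1 | F3p2 | F3p3.
Definition F3le (u v : F3t) : Prop :=
  match u, v with
  | F3top, F3top | F3p1, F3p1 | F3p2, F3p2 | F3p3, F3p3 => True
  | F3p1, F3top | F3p2, F3top | F3p3, F3top => True
  | _, _ => False
  end.
Definition F3 := FinPoset F3t F3le.

Definition order_embeds (Y : finposet) (A : biHA) : Prop :=
  exists f : Y -> pt A, forall u v, fle Y u v <-> ple (f u) (f v).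

Definition cont_surj_bipmorphism (A : biHA) (Y : finposet) : Prop :=
  exists f : pt A -> Y,
    (forall S : Y -> Prop, popen (fun x => S (f x))) /\
    (forall v : Y, exists x, f x = v) /\
    (forall x y, ple x y -> fle Y (f x) (f y)) /\
    (forall x v, fle Y (f x) v -> exists x', ple x x' /\ f x' = v) /\
    (forall x v, fle Y v (f x) -> exists x', ple x' x /\ f x' = v).

Definition validates_biLC (A : biHA) : Prop :=
  forall a b : A, bjoin (bimp a b) (bimp b a) = btop.

Definition validates_LFC (A : biHA) : Prop :=
  validates_biLC A /\
  ~ order_embeds F0 A /\                 (* A |= beta(F0) *)
  ~ cont_surj_bipmorphism A F1 /\       (* A |= J(F1) *)
  ~ cont_surj_bipmorphism A F2 /\       (* A |= J(F2) *)
  ~ cont_surj_bipmorphism A F3.         (* A |= J(F3) *)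

Definition interval_gt {A : biHA} (y x : pt A) (k : nat) : Prop :=
  exists l : list (pt A), k < length l /\
    (forall u, In u l -> ple y u /\ ple u x) /\
    ForallOrdPairs (fun u v => ~ peq u v) l.

(* Main.v *)
Require Import Defs.
From Stdlib Require Import List Arith Classical ClassicalEpsilon Lia.
Import ListNotations.

Section Lat.
Variable A : biHA.

Lemma meet_idem (a : A) : bmeet a a = a.
Proof. pose proof (meetKjoin _ a (bmeet a a)) as H. rewrite joinKmeet in H. exact H. Qed.
Lemma join_idem (a : A) : bjoin a a = a.
Proof. pose proof (joinKmeet _ a (bjoin a a)) as H. rewrite meetKjoin in H. exact H. Qed.
Lemma ble_refl (a : A) : ble a a.
Proof. apply meet_idem. Qed.
Lemma ble_trans (a b c : A) : ble a b -> ble b c -> ble a c.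
Proof. unfold ble; intros Hab Hbc. rewrite <- Hab. rewrite <- meetA, Hbc. reflexivity. Qed.
Lemma meet_lb1 (a b : A) : ble (bmeet a b) a.
Proof. unfold ble. rewrite (meetC _ (bmeet a b) a), meetA, meet_idem. reflexivity. Qed.
Lemma meet_lb2 (a b : A) : ble (bmeet a b) b.
Proof. unfold ble. rewrite <- meetA, meet_idem. reflexivity. Qed.
Lemma meet_glb (a b c : A) : ble c a -> ble c b -> ble c (bmeet a b).
Proof. unfold ble; intros H1 H2. rewrite meetA, H1, H2. reflexivity. Qed.
Lemma ble_join (a b : A) : ble a b <-> bjoin a b = b.
Proof. unfold ble; split; intro H.
- rewrite <- H. rewrite joinC, meetC, joinKmeet. reflexivity.
- rewrite <- H. apply meetKjoin. Qed.
Lemma join_ub1 (a b : A) : ble a (bjoin a b).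
Proof. apply meetKjoin. Qed.
Lemma join_ub2 (a b : A) : ble b (bjoin a b).
Proof. unfold ble. rewrite joinC. apply meetKjoin. Qed.
Lemma join_lub (a b c : A) : ble a c -> ble b c -> ble (bjoin a b) c.
Proof. rewrite !ble_join. intros H1 H2. rewrite <- joinA, H2, H1. reflexivity. Qed.
Lemma ble_top (a : A) : ble a btop.
Proof. apply meet_top. Qed.
Lemma ble_bot (a : A) : ble bbot a.
Proof. apply ble_join. rewrite joinC. apply join_bot. Qed.
Lemma join_mono (a a' b b' : A) : ble a a' -> ble b b' -> ble (bjoin a b) (bjoin a' b').
Proof. intros. apply join_lub; eapply ble_trans; eauto using join_ub1, join_ub2. Qed.
Lemma meet_mono (a a' b b' : A) : ble a a' -> ble b b' -> ble (bmeet a b) (bmeet a' b').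
Proof. intros. apply meet_glb. eapply ble_trans; [apply meet_lb1|auto]. eapply ble_trans; [apply meet_lb2|auto]. Qed.
Lemma mp_le (a b : A) : ble (bmeet a (bimp a b)) b.
Proof. pose proof (imp_res _ a b (bimp a b)) as H. rewrite meetC. apply H. apply meet_idem. Qed.
Lemma coimp_le (a b : A) : ble a (bjoin b (bcoimp a b)).
Proof. apply (coimp_res _ a b (bcoimp a b)). apply meet_idem. Qed.

Definition P (x : pt A) := proj1_sig x.
Lemma pf_up (x : pt A) a b : P x a -> ble a b -> P x b.
Proof. destruct (proj2_sig x) as (_&_&H&_). unfold P; eauto. Qed.
Lemma pf_meet (x : pt A) a b : P x a -> P x b -> P x (bmeet a b).
Proof. destruct (proj2_sig x) as (_&_&_&H&_). unfold P; eauto. Qed.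
Lemma pf_join (x : pt A) a b : P x (bjoin a b) -> P x a \/ P x b.
Proof. destruct (proj2_sig x) as (_&_&_&_&H). unfold P; eauto. Qed.
Lemma pf_top (x : pt A) : P x btop.
Proof. destruct (proj2_sig x) as (H&_). exact H. Qed.
Lemma pf_nbot (x : pt A) : ~ P x bbot.
Proof. destruct (proj2_sig x) as (_&H&_). exact H. Qed.
Lemma pf_mp (x : pt A) a b : P x a -> P x (bimp a b) -> P x b.
Proof. intros H1 H2. apply (pf_up x (bmeet a (bimp a b))); [apply pf_meet; assumption| apply mp_le]. Qed.

End Lat.

Section Constr.
Variable A : biHA.
Variable L : nat -> list A.
Hypothesis HL : forall a, exists k, In a (L k).
Variable Bad : A -> A -> Prop.
Hypothesis Bmono : forall f f' i i', ble f' f -> ble i i' -> Bad f i -> Bad f' i'.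
Hypothesis Bsplit : forall f i e, Bad (bmeet f e) i -> Bad f (bjoin i e) -> Bad f i.
Hypothesis Bself : forall f, Bad f f.
Variables f0 i0 : A.
Hypothesis H0 : ~ Bad f0 i0.

Definition step (fi : A * A) (e : A) : A * A :=
  if excluded_middle_informative (Bad (bmeet (fst fi) e) (snd fi))
  then (fst fi, bjoin (snd fi) e) else (bmeet (fst fi) e, snd fi).
Definition run (fi : A * A) (l : list A) := fold_left step l fi.
Fixpoint st (k : nat) : A * A :=
  match k with 0 => run (f0, i0) (L 0) | S k' => run (st k') (L (S k')) end.

Definition Good (fi : A * A) := ~ Bad (fst fi) (snd fi).
Definition Rel (fi fi' : A * A) := ble (fst fi') (fst fi) /\ ble (snd fi) (snd fi').

Lemma Rel_refl fi : Rel fi fi.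
Proof. split; apply ble_refl. Qed.
Lemma Rel_trans a b c : Rel a b -> Rel b c -> Rel a c.
Proof. intros [] []; split; eapply ble_trans; eauto. Qed.

Lemma step_good fi e : Good fi -> Good (step fi e).
Proof. unfold Good, step; intro G. destruct excluded_middle_informative; simpl; auto.
intro B. apply G. eapply Bsplit; eauto. Qed.
Lemma step_rel fi e : Rel fi (step fi e).
Proof. unfold Rel, step; destruct excluded_middle_informative; simpl; split;
 auto using ble_refl, join_ub1, meet_lb1. Qed.
Lemma step_dec fi e : ble (fst (step fi e)) e \/ ble e (snd (step fi e)).
Proof. unfold step; destruct excluded_middle_informative; simpl;
 auto using join_ub2, meet_lb2. Qed.

Lemma run_good l : forall fi, Good fi -> Good (run fi l).
Proof. induction l; simpl; auto. intros. apply IHl, step_good; auto. Qed.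
Lemma run_rel l : forall fi, Rel fi (run fi l).
Proof. induction l; simpl; intros. apply Rel_refl. eapply Rel_trans; [apply step_rel|apply IHl]. Qed.
Lemma run_dec l : forall fi z, In z l -> ble (fst (run fi l)) z \/ ble z (snd (run fi l)).
Proof. induction l; simpl; intros fi z Hz. destruct Hz. destruct Hz as [<-|Hz]; auto.
 destruct (run_rel l (step fi a)) as [R1 R2]. destruct (step_dec fi a) as [D|D].
 left; eapply ble_trans; eauto. right; eapply ble_trans; eauto. Qed.

Lemma st_good k : Good (st k).
Proof. induction k; simpl; apply run_good; auto. Qed.
Lemma st_rel0 k : Rel (f0, i0) (st k).
Proof. induction k; simpl. apply run_rel. eapply Rel_trans; [apply IHk| apply run_rel]. Qed.
Lemma st_mono k j : Rel (st k) (st (j + k)).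
Proof. induction j; simpl. apply Rel_refl. eapply Rel_trans; [apply IHj|apply run_rel]. Qed.
Lemma st_mono' k k' : k <= k' -> Rel (st k) (st k').
Proof. intro H. replace k' with ((k' - k) + k) by lia. apply st_mono. Qed.
Lemma st_dec z : exists k, ble (fst (st k)) z \/ ble z (snd (st k)).
Proof. destruct (HL z) as [k Hk]. exists k. destruct k; simpl; apply run_dec; auto. Qed.

Lemma bad_of f i : ble f i -> Bad f i.
Proof. intro H. apply (Bmono f f f i); auto using ble_refl. Qed.

Definition qf (z : A) := exists k, ble (fst (st k)) z.

Lemma construct :
  exists q : A -> Prop, prime_filter A q /\ q f0 /\ ~ q i0 /\
   (forall z, ~ q z -> exists f i, ~ Bad f i /\ ble z i) /\
   (forall z, q z -> exists f i, ~ Bad f i /\ ble f z).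
Proof.
exists qf. split; [|split; [|split; [|split]]].
- split; [|split; [|split; [|split]]].
  + exists 0. apply ble_top.
  + intros [k Hk]. apply (st_good k). apply bad_of. eapply ble_trans; [exact Hk| apply ble_bot].
  + intros a b [k Hk] Hab. exists k. eapply ble_trans; eauto.
  + intros a b [k1 H1] [k2 H2]. exists (max k1 k2).
    destruct (st_mono' k1 (max k1 k2)) as [R1 _]; [lia|].
    destruct (st_mono' k2 (max k1 k2)) as [R2 _]; [lia|].
    apply meet_glb. eapply ble_trans; [exact R1|exact H1]. eapply ble_trans; [exact R2|exact H2].
  + intros a b [k Hk]. destruct (classic (qf a)) as [Ha|Ha]; auto.
    destruct (classic (qf b)) as [Hb|Hb]; auto. exfalso.
    destruct (st_dec a) as [ka [Da|Da]]. apply Ha; exists ka; auto.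
    destruct (st_dec b) as [kb [Db|Db]]. apply Hb; exists kb; auto.
    set (K := max k (max ka kb)).
    destruct (st_mono' k K) as [R1 _]; [lia|].
    destruct (st_mono' ka K) as [_ R2]; [lia|].
    destruct (st_mono' kb K) as [_ R3]; [lia|].
    apply (st_good K). apply bad_of. eapply ble_trans; [eapply ble_trans; [exact R1|exact Hk]|].
    apply join_lub; eapply ble_trans; eauto.
- exists 0. apply (st_rel0 0).
- intros [k Hk]. apply (st_good k). apply bad_of. eapply ble_trans; [exact Hk|apply (st_rel0 k)].
- intros z Hz. destruct (st_dec z) as [k [D|D]]. exfalso; apply Hz; exists k; auto.
  exists (fst (st k)), (snd (st k)). split; auto. apply st_good.
- intros z [k Hk]. exists (fst (st k)), (snd (st k)). split; auto. apply st_good.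
Qed.
End Constr.

Section PF.
Variable A : biHA.
Variable L : nat -> list A.
Hypothesis HL : forall a, exists k, In a (L k).

Lemma PF1 (x : pt A) a b : ~ P A x (bimp a b) ->
  exists q : pt A, ple x q /\ P A q a /\ ~ P A q b.
Proof.
intro Hn.
set (Bad := fun f i => exists c, P A x c /\ ble (bmeet c f) i).
destruct (construct A L HL Bad) with (f0 := a) (i0 := b)
  as (q & Hq & Hqa & Hqb & Hn1 & _).
- intros f f' i i' H1 H2 [c [Hc Hle]]. exists c. split; auto.
  eapply ble_trans; [|exact H2]. eapply ble_trans; [|exact Hle].
  apply meet_mono; auto using ble_refl.
- intros f i e [c1 [Hc1 H1]] [c2 [Hc2 H2]]. exists (bmeet c1 c2).
  split. apply pf_meet; auto.
  set (w := bmeet (bmeet c1 c2) f).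
  assert (Hw : ble w (bjoin i e)).
  { eapply ble_trans; [|exact H2]. apply meet_mono; auto using ble_refl, meet_lb2. }
  unfold ble in Hw. rewrite <- Hw. rewrite meet_joinDr. apply join_lub. apply meet_lb2.
  eapply ble_trans; [|exact H1]. unfold w.
  apply meet_glb. eapply ble_trans; [apply meet_lb1|]. eapply ble_trans; [apply meet_lb1|apply meet_lb1].
  apply meet_glb. eapply ble_trans; [apply meet_lb1| apply meet_lb2]. apply meet_lb2.
- intros f. exists btop. split. apply pf_top. rewrite meetC, meet_top. apply ble_refl.
- intros [c [Hc Hle]]. apply Hn. eapply pf_up; [exact Hc|]. apply (imp_res _ a b c). exact Hle.
- exists (exist _ q Hq). simpl. split; [|split; auto].
  intros c Hc. apply NNPP. intro Hnc. destruct (Hn1 c Hnc) as (f & i & Hb & Hci).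
  apply Hb. exists c. split; auto. eapply ble_trans; [apply meet_lb1|exact Hci].
Qed.

Lemma PF2 (x : pt A) a b : P A x (bcoimp a b) ->
  exists q : pt A, ple q x /\ P A q a /\ ~ P A q b.
Proof.
intro Hp.
set (Bad := fun f i => exists d, ~ P A x d /\ ble f (bjoin i d)).
destruct (construct A L HL Bad) with (f0 := a) (i0 := b)
  as (q & Hq & Hqa & Hqb & _ & Hn2).
- intros f f' i i' H1 H2 [d [Hd Hle]]. exists d. split; auto.
  eapply ble_trans; [exact H1|]. eapply ble_trans; [exact Hle|].
  apply join_mono; auto using ble_refl.
- intros f i e [d1 [Hd1 H1]] [d2 [Hd2 H2]]. exists (bjoin d1 d2).
  split. intro H. destruct (pf_join A x _ _ H); auto.
  assert (Hw : ble f (bjoin (bjoin i (bjoin d1 d2)) e)).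
  { eapply ble_trans; [exact H2|]. repeat apply join_lub.
    - eapply ble_trans; [|apply join_ub1]. apply join_ub1.
    - apply join_ub2.
    - eapply ble_trans; [|apply join_ub1]. eapply ble_trans; [|apply join_ub2]. apply join_ub2. }
  unfold ble in Hw. rewrite <- Hw. rewrite meet_joinDr. apply join_lub. apply meet_lb2.
  eapply ble_trans; [exact H1|]. apply join_mono. apply ble_refl. apply join_ub1.
- intros f. exists bbot. split. apply pf_nbot. rewrite join_bot. apply ble_refl.
- intros [d [Hd Hle]]. apply Hd. eapply pf_up; [exact Hp|]. apply (coimp_res _ a b d). exact Hle.
- exists (exist _ q Hq). simpl. split; [|split; auto].
  intros z Hz. apply NNPP. intro Hnz. destruct (Hn2 z Hz) as (f & i & Hb & Hfz).
  apply Hb. exists z. split; auto. eapply ble_trans; [exact Hfz|apply join_ub2].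
Qed.
End PF.

Section Gen.
Variable A : biHA.
Variable g : nat -> A.
Variable n : nat.
Fixpoint LL (k : nat) : list A :=
  match k with
  | 0 => bbot :: btop :: map g (seq 0 n)
  | S k' => LL k' ++ flat_map (fun a => flat_map (fun b =>
        [bjoin a b; bmeet a b; bimp a b; bcoimp a b]) (LL k')) (LL k')
  end.
Lemma LL_mono j k a : In a (LL k) -> In a (LL (j + k)).
Proof. induction j; simpl; auto. intro H. apply in_or_app. left. auto. Qed.
Lemma LL_mono' k k' a : k <= k' -> In a (LL k) -> In a (LL k').
Proof. intros H. replace k' with ((k' - k) + k) by lia. apply LL_mono. Qed.
Lemma LL_closed : closed_sub A (fun a => exists k, In a (LL k)).
Proof.
split; [exists 0; simpl; auto|split; [exists 0; simpl; auto|]].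
intros a b [k1 H1] [k2 H2].
assert (Ha : In a (LL (max k1 k2))) by (eapply LL_mono'; [|exact H1]; lia).
assert (Hb : In b (LL (max k1 k2))) by (eapply LL_mono'; [|exact H2]; lia).
assert (K : forall c, In c [bjoin a b; bmeet a b; bimp a b; bcoimp a b] ->
   exists k, In c (LL k)).
{ intros c Hc. exists (S (max k1 k2)). simpl. apply in_or_app. right.
  apply in_flat_map. exists a. split; auto. apply in_flat_map. exists b. split; auto. }
repeat split; apply K; simpl; auto.
Qed.
Lemma LL_gen_in i : i < n -> exists k, In (g i) (LL k).
Proof. intro H. exists 0. simpl. right. right. apply in_map. apply in_seq. lia. Qed.
End Gen.

Lemma chain (A : biHA) (HLC : validates_biLC A) (m q1 q2 : pt A) :
  ple m q1 -> ple m q2 -> ple q1 q2 \/ ple q2 q1.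
Proof.
intros H1 H2. destruct (classic (ple q1 q2)) as [|N1]; [left; auto|]. right.
intros b Hb. apply NNPP; intro Hnb. apply N1. intros a Ha. apply NNPP; intro Hna.
assert (Ht := pf_top A m). unfold P in Ht. rewrite <- (HLC a b) in Ht.
destruct (pf_join A m _ _ Ht) as [Hm|Hm].
- apply Hnb. apply (pf_mp A q1 a b); [exact Ha| apply H1; exact Hm].
- apply Hna. apply (pf_mp A q2 b a); [exact Hb| apply H2; exact Hm].
Qed.

Lemma FOP_filter (X : Type) (R : X -> X -> Prop) (f : X -> bool) l :
  ForallOrdPairs R l -> ForallOrdPairs R (filter f l).
Proof.
induction 1; simpl. constructor. destruct (f a); auto. constructor; auto.
rewrite Forall_forall in *. intros x Hx. apply filter_In in Hx. apply H; tauto.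
Qed.

Lemma filter_len (X : Type) (f : X -> bool) l :
  length (filter f l) + length (filter (fun x => negb (f x)) l) = length l.
Proof. induction l; simpl; auto. destruct (f a); simpl; lia. Qed.

Lemma pigeon (X : Type) (R : X -> X -> Prop) (Q : X -> nat -> Prop) n :
  forall l, ForallOrdPairs R l -> 2 ^ n < length l ->
  exists u v, In u l /\ In v l /\ R u v /\ forall i, i < n -> (Q u i <-> Q v i).
Proof.
induction n; intros l Hl Hlen.
- destruct l as [|u [|v l]]; simpl in Hlen; try lia.
  inversion Hl; subst. inversion H1; subst. exists u, v. simpl. repeat split; auto; lia.
- set (fb := fun u => if excluded_middle_informative (Q u n) then true else false).
  pose proof (filter_len X fb l) as FL. rewrite Nat.pow_succ_r' in Hlen.
  assert (Hfb : forall u, fb u = true <-> Q u n).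
  { intro u; unfold fb; destruct excluded_middle_informative; split; auto; discriminate. }
  destruct (Nat.lt_ge_cases (2 ^ n) (length (filter fb l))) as [C|C].
  + destruct (IHn _ (FOP_filter _ _ fb _ Hl) C) as (u & v & Hu & Hv & Ruv & Hag).
    apply filter_In in Hu. apply filter_In in Hv.
    exists u, v. split; [tauto|split; [tauto|split; [exact Ruv|]]]. intros i Hi'.
    destruct (Nat.eq_dec i n) as [->|Ne]. rewrite <- !Hfb. destruct Hu as [_ ->]; destruct Hv as [_ ->]. tauto.
    apply Hag. lia.
  + assert (C2 : 2 ^ n < length (filter (fun x => negb (fb x)) l)) by lia.
    destruct (IHn _ (FOP_filter _ _ _ _ Hl) C2) as (u & v & Hu & Hv & Ruv & Hag).
    apply filter_In in Hu. apply filter_In in Hv.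
    exists u, v. split; [tauto|split; [tauto|split; [exact Ruv|]]]. intros i Hi'.
    destruct (Nat.eq_dec i n) as [->|Ne].
    * destruct Hu as [_ Hu]; destruct Hv as [_ Hv].
      destruct (fb u) eqn:E1; try discriminate. destruct (fb v) eqn:E2; try discriminate.
      rewrite <- !Hfb, E1, E2. tauto.
    * apply Hag. lia.
Qed.

Theorem lemma3p20 (n : nat) (A : biHA) (m y x : pt A) :
  0 < n ->
  infinite_alg A ->
  n_generated A n ->
  subdirectly_irreducible A ->
  validates_LFC A ->
  minimal m ->
  (forall z : pt A, (plt m z \/ minimal z) /\ ~ (plt m z /\ minimal z)) ->
  (forall z : pt A, minimal z -> ~ peq z m ->
     exists s, imm_succ z s /\ plt m s /\ forall s', imm_succ z s' -> peq s' s) ->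
  ple y x -> ple m y ->
  interval_gt y x (2 ^ n) ->
  (exists y' : pt A, plt y y' /\ ple y' x /\
     exists w : pt A, imm_succ w y' /\ ~ plt m w) /\
  (exists z : pt A, minimal z /\ ple z x /\ ~ ple z y).
Proof.
intros _ _ [g Hg] _ [HLC _] Hm Hstr Hsucc Hyx Hmy Hint.
assert (Hple_trans : forall a b c : pt A, ple a b -> ple b c -> ple a c)
  by (unfold ple; auto).
assert (C2 : exists z : pt A, minimal z /\ ple z x /\ ~ ple z y).
{ apply NNPP. intro Hno.
  assert (D : forall q, ple q x -> ple q y \/ ple y q).
  { intros q Hq. destruct (Hstr q) as [[[Hmq _]|Hmin] _].
    - apply (chain A HLC m q y Hmq Hmy).
    - left. apply NNPP. intro Hn. apply Hno. exists q. auto. }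
  assert (HL : forall a, exists k, In a (LL A g n k)).
  { apply (Hg _ (LL_closed A g n)). apply LL_gen_in. }
  destruct Hint as (l & Hlen & Hin & Hfop).
  destruct (pigeon (pt A) (fun u v => ~ peq u v) (fun u i => P A u (g i)) n l Hfop Hlen)
    as (u0 & v0 & Hu0 & Hv0 & Nuv & Hcol).
  assert (W : exists u v, ple y u /\ ple v x /\ ple u v /\ ~ ple v u /\
             forall i, i < n -> (P A u (g i) <-> P A v (g i))).
  { destruct (Hin u0 Hu0) as [Hyu Hux]. destruct (Hin v0 Hv0) as [Hyv Hvx].
    destruct (chain A HLC m u0 v0 (Hple_trans _ _ _ Hmy Hyu) (Hple_trans _ _ _ Hmy Hyv)) as [Le|Le].
    - exists u0, v0. repeat split; auto. intro H; apply Nuv; split; auto.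
      apply Hcol; auto. apply Hcol; auto.
    - exists v0, u0. repeat split; auto. intro H; apply Nuv; split; auto.
      apply Hcol; auto. apply Hcol; auto. }
  destruct W as (u & v & Hyu & Hvx & Huv & Nvu & Hc).
  set (S := fun a => forall p : pt A, ple u p -> ple p v -> (P A p a <-> P A v a)).
  assert (Hmp : forall p, ple u p -> ple m p) by eauto.
  assert (HS : closed_sub A S).
  { split; [|split].
    - intros p _ _. split; intro H; exfalso; eapply pf_nbot; eauto.
    - intros p _ _. split; intro; apply pf_top.
    - intros a b Sa Sb. split; [|split; [|split]].
      + intros p H1 H2. specialize (Sa p H1 H2). specialize (Sb p H1 H2).
        split; intro H.
        * apply H2. exact H.
        * destruct (pf_join A v _ _ H) as [Ha|Hb].
          -- eapply pf_up; [apply Sa; exact Ha| apply join_ub1].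
          -- eapply pf_up; [apply Sb; exact Hb| apply join_ub2].
      + intros p H1 H2. specialize (Sa p H1 H2). specialize (Sb p H1 H2).
        split; intro H.
        * apply H2. exact H.
        * apply pf_meet. apply Sa. eapply pf_up; [exact H|apply meet_lb1].
          apply Sb. eapply pf_up; [exact H|apply meet_lb2].
      + intros p H1 H2. split; intro H.
        * apply H2. exact H.
        * apply NNPP. intro Hn. destruct (PF1 A _ HL p a b Hn) as (q & Hpq & Hqa & Hqb).
          destruct (chain A HLC m v q (Hmp v Huv) (Hmp q (Hple_trans _ _ _ H1 Hpq))) as [Le|Le].
          -- apply Hqb. apply (pf_mp A q a b Hqa). apply Le. exact H.
          -- assert (Huq : ple u q) by eauto.
             apply Hqb. apply (Sb q Huq Le). apply (pf_mp A v a b); auto.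
             apply (Sa q Huq Le). exact Hqa.
      + intros p H1 H2. split; intro H.
        * apply H2. exact H.
        * destruct (PF2 A _ HL v a b H) as (q & Hqv & Hqa & Hqb).
          assert (E : exists q', ple q' p /\ P A q' a /\ ~ P A q' b).
          { destruct (D q (Hple_trans _ _ _ Hqv Hvx)) as [Le|Le].
            - exists q. split; auto. eauto.
            - destruct (chain A HLC m q p (Hple_trans _ _ _ Hmy Le) (Hmp p H1)) as [Le2|Le2].
              + exists q; auto.
              + exists p. split; [unfold ple; auto|]. split.
                * apply (Sa p H1 H2). apply Hqv. exact Hqa.
                * intro Hpb. apply Hqb. apply Le2. exact Hpb. }
          destruct E as (q' & Hq'p & Hq'a & Hq'b).
          apply Hq'p. pose proof (pf_up A q' _ _ Hq'a (coimp_le A a b)) as J.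
          destruct (pf_join A q' _ _ J); tauto. }
  assert (Hgen : forall i, i < n -> S (g i)).
  { intros i Hi p H1 H2. split; intro H. apply H2; exact H.
    apply H1. apply Hc; auto. }
  pose proof (Hg S HS Hgen) as All.
  apply Nvu. intros a Ha. apply (All a u (fun _ h => h) Huv). exact Ha. }
split; [|exact C2].
destruct C2 as (z & Hz & Hzx & Hzy).
assert (Nzm : ~ peq z m) by (intros [H1 _]; apply Hzy; eauto).
destruct (Hsucc z Hz Nzm) as (s & [[Hzs Nsz] Himm] & [Hms _] & _).
assert (Hmx : ple m x) by eauto.
exists s. split; [|split].
- destruct (chain A HLC m y s Hmy Hms) as [Le|Le].
  + split; auto. intro H. apply Hzy. eauto.
  + exfalso. apply Hzy. eauto.
- destruct (chain A HLC m s x Hms Hmx) as [Le|Le]; auto.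
  apply NNPP. intro Nsx. apply Himm. exists x. split; split; auto.
  intro Hxz. apply Nzm. split. apply Hz. eauto. eauto.
- exists z. split. split; [split; auto|exact Himm].
  destruct (Hstr z) as [_ H]. intro; apply H; auto.
Qed.
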